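(* Let $V$ be a finite nonempty set and $f:\{0,1\}^V\to\{0,1\}^V$. Every subnetwork of $f$ (in particular $f$ itself) has exactly one fixed point if and only if $f$ has no even-self-dual and no odd-self-dual subnetwork.
   Context: For $x,y\in\{0,1\}^V$, $x\oplus y$ is componentwise addition mod 2, $1$ denotes the all-ones point, and $\|x\|$ is the number of components equal to $1$; $x$ is even (odd) if $\|x\|$ is even (odd). The conjugate of a network $g$ on $W$ is $\tilde g(x)=g(x)\oplus x$. For nonempty $I\subseteq V$ and $z\in\{0,1\}^{V\setminus I}$, the subnetwork of $f$ induced by $z$ is $h:\{0,1\}^I\to\{0,1\}^I$ with $h(x|_I)=f(x)|_I$ for all $x\in\{0,1\}^V$ whose restriction to $V\setminus I$ is $z$ ($f$ is a subnetwork of itself). A network $g$ on $W$ is self-dual if $g(x\oplus 1)=g(x)\oplus 1$ for all $x$; even (odd) if $\tilde g(\{0,1\}^W)$ is exactly the set of even (odd) points; even-self-dual (odd-self-dual) if both even (odd) and self-dual. *)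

(* Defs.v *)
From mathcomp Require Import all_boot.
Set Implicit Arguments. Unset Strict Implicit. Unset Printing Implicit Defensive.

Definition point (W : finType) := {ffun W -> bool}.
Definition network (W : finType) := point W -> point W.

Definition xorp (W : finType) (x y : point W) : point W := [ffun v => addb (x v) (y v)].
Definition ones (W : finType) : point W := [ffun _ => true].
Definition wt (W : finType) (x : point W) : nat := #|[set v | x v]|.
Definition even_pt (W : finType) (x : point W) : bool := ~~ odd (wt x).
Definition odd_pt (W : finType) (x : point W) : bool := odd (wt x).

Definition conjn (W : finType) (g : network W) : network W := fun x => xorp (g x) x.

Definition self_dual (W : finType) (g : network W) : Prop :=
  forall x, g (xorp x (ones W)) = xorp (g x) (ones W).

Definition even_net (W : finType) (g : network W) : Prop :=
  forall y : point W, (exists x, conjn g x = y) <-> even_pt y.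
Definition odd_net (W : finType) (g : network W) : Prop :=
  forall y : point W, (exists x, conjn g x = y) <-> odd_pt y.

Definition even_self_dual (W : finType) (g : network W) : Prop :=
  even_net g /\ self_dual g.
Definition odd_self_dual (W : finType) (g : network W) : Prop :=
  odd_net g /\ self_dual g.

Definition subT (V : finType) (I : {set V}) : finType := {v : V | v \in I}.

Definition glue (V : finType) (I : {set V}) (xI : point (subT I)) (z : point V)
  : point V :=
  [ffun v => if @insub V (fun v => v \in I) (subT I) v is Some u then xI u else z v].

(* subnetwork of f on I induced by the restriction of z to V \ I
   (only the values of z outside I matter) *)
Definition subnet (V : finType) (f : network V) (I : {set V}) (z : point V)
  : network (subT I) :=
  fun xI => [ffun u : subT I => f (glue xI z) (val u)].

Arguments subnet {V} f I z _.
Arguments glue {V} {I} xI z.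

Definition unique_fixed_point (W : finType) (g : network W) : Prop :=
  exists! x, g x = x.

(* Main.v *)
Require Import Defs.
From mathcomp Require Import all_boot.
Set Implicit Arguments. Unset Strict Implicit. Unset Printing Implicit Defensive.


Definition cmp (W : finType) (x : point W) : point W := xorp x (ones W).
Definition flip (W : finType) (j : W) (y : point W) : point W :=
  [ffun k => if k == j then ~~ y k else y k].

Lemma cmpE (W : finType) (x : point W) v : cmp x v = ~~ x v.
Proof. by rewrite /cmp /ones /xorp !ffunE addbT. Qed.
Lemma cmpK (W : finType) (x : point W) : cmp (cmp x) = x.
Proof. by apply/ffunP => v; rewrite !cmpE negbK. Qed.
Lemma flipE (W : finType) (j : W) y k : flip j y k = if k == j then ~~ y k else y k.
Proof. by rewrite ffunE. Qed.
Lemma flipK (W : finType) (j : W) y : flip j (flip j y) = y.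
Proof. apply/ffunP => k; rewrite !flipE; by case: (k == j); rewrite ?negbK. Qed.
Lemma flipC (W : finType) (j k : W) y : flip j (flip k y) = flip k (flip j y).
Proof. apply/ffunP => l; rewrite !flipE; by case: (l == j); case: (l == k). Qed.

Lemma odd_wt_xor (W : finType) (a b : point W) :
  odd (wt (xorp a b)) = odd (wt a) (+) odd (wt b).
Proof.
rewrite /wt.
set A := [set v | a v]; set B := [set v | b v].
have -> : [set v | xorp a b v] = (A :\: B) :|: (B :\: A).
  apply/setP => v; rewrite !inE ffunE; by case: (a v); case: (b v).
rewrite cardsU.
have -> : (A :\: B) :&: (B :\: A) = set0.
  apply/setP => v; rewrite !inE; by case: (a v); case: (b v).
rewrite cards0 subn0 !cardsD oddD !oddB ?subset_leq_card ?subsetIl //.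
rewrite [B :&: A]setIC.
by case: (odd #|A|); case: (odd #|B|); case: (odd #|A :&: B|).
Qed.

Lemma odd_wt_flip (W : finType) (j : W) y : odd (wt (flip j y)) = ~~ odd (wt y).
Proof.
have -> : flip j y = xorp y [ffun k => k == j].
  apply/ffunP => k; rewrite flipE !ffunE; case: (k == j); by rewrite ?addbT ?addbF.
rewrite odd_wt_xor /wt.
have -> : [set v | [ffun k => k == j] v] = [set j].
  by apply/setP => k; rewrite !inE ffunE.
by rewrite cards1 addbT.
Qed.

Definition A1 (W : finType) (G : network W) :=
  forall (j : W) (b : bool) (y : point W),
    exists x : point W, x j = b /\ forall k, k != j -> G x k = y k.
Definition A2 (W : finType) (G : network W) :=
  forall (j : W) (x x' : point W), x j = x' j ->
    (forall k, k != j -> G x k = G x' k) -> x = x'.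
Definition good (W : finType) (G : network W) (y : point W) :=
  exists a, G a = y /\ G (cmp a) = y.

Lemma L3 (W : finType) (G : network W) : A2 G ->
  forall x x', G x = G x' -> x = x' \/ x' = cmp x.
Proof.
move=> H2 x x' E.
case: (boolP [exists j, x' j == x j]) => [/existsP [j /eqP Hj] | /existsPn Hn].
  left; apply: (H2 j) => // k _; by rewrite E.
right; apply/ffunP => v; rewrite cmpE; move: (Hn v); by case: (x v); case: (x' v).
Qed.

Lemma L4 (W : finType) (G : network W) : A2 G ->
  forall y, good G y -> forall j c, G c <> flip j y.
Proof.
move=> H2 y [a [Ha Hca]] j c Hc.
pose a' := if a j == c j then a else cmp a.
have Ga' : G a' = y by rewrite /a'; case: ifP.
have a'j : a' j = c j.
  rewrite /a'; case: ifP => [/eqP//|]; rewrite cmpE; by case: (a j); case: (c j).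
have Hca' : c = a'.
  apply: (H2 j) => [|k Hk]; first by rewrite a'j.
  by rewrite Hc Ga' flipE (negbTE Hk).
have : G a' = flip j y by rewrite -Hca'.
rewrite Ga' => /ffunP /(_ j); rewrite flipE eqxx; by case: (y j).
Qed.

Lemma L5 (W : finType) (G : network W) : A1 G -> A2 G ->
  forall y, good G y -> forall j k, j != k -> good G (flip j (flip k y)).
Proof.
move=> H1 H2 y Gy j k jk.
set y' := flip j (flip k y).
have key : forall x, (forall l, l != k -> G x l = y' l) -> G x = y'.
  move=> x Hx; apply/ffunP => l.
  case: (eqVneq l k) => [-> | lk]; last exact: Hx.
  case: (eqVneq (G x k) (y' k)) => // Hne.
  exfalso; apply: (@L4 _ _ H2 _ Gy j x).
  have : G x = flip k y'.
    apply/ffunP => l'; rewrite flipE; case: (eqVneq l' k) => [->|lk]; last exact: Hx.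
    by move: Hne; case: (G x k); case: (y' k).
  by rewrite /y' [flip k (flip j _)]flipC flipK.
have [x0 [x0k Hx0]] := H1 k false y'.
have [x1 [x1k Hx1]] := H1 k true y'.
have G0 := key _ Hx0; have G1 := key _ Hx1.
have : G x0 = G x1 by rewrite G0 G1.
case/(L3 H2) => [E | E].
  by move: x0k; rewrite E x1k.
by exists x0; rewrite -E.
Qed.

Lemma L6 (W : finType) (G : network W) : A1 G -> A2 G ->
  forall w, good G w -> forall y, ~~ odd (wt (xorp y w)) -> good G y.
Proof.
move=> H1 H2 w Gw.
suff H : forall n y, wt (xorp y w) = n -> ~~ odd n -> good G y.
  by move=> y; apply: H.
elim/ltn_ind => n IH y Hn Hev.
set D := [set v | xorp y w v].
have HD : #|D| = n by exact: Hn.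
case: (set_0Vmem D) => [D0 | [j jD]].
  have -> : y = w.
    apply/ffunP => v; have : v \notin D by rewrite D0 inE.
    rewrite inE ffunE; by case: (y v); case: (w v).
  exact: Gw.
have HD1 := cardsD1 j D; rewrite jD in HD1.
case: (set_0Vmem (D :\ j)) => [Dj0 | [k kD]].
  by move: Hev; rewrite -HD HD1 Dj0 cards0.
have HD2 := cardsD1 k (D :\ j); rewrite kD in HD2.
move: kD; rewrite !inE => /andP [kj kD'].
set y'' := flip j (flip k y).
have Dy : [set v | xorp y'' w v] = D :\ j :\ k.
  apply/setP => v; rewrite !inE !ffunE.
  move: jD kD' kj; rewrite !inE !ffunE.
  case: (boolP (v == j)) => vj; case: (boolP (v == k)) => vk /=.
  - by rewrite -(eqP vj) -(eqP vk) eqxx.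
  - by rewrite -(eqP vj); case: (y v); case: (w v).
  - by rewrite -(eqP vk); case: (y v); case: (w v).
  - by [].
have Hw'' : wt (xorp y'' w) = #|D :\ j :\ k| by rewrite /wt Dy.
have Gy'' : good G y''.
  apply: (IH #|D :\ j :\ k|) => //.
    by rewrite -HD HD1 HD2 add1n add1n ltnS leqnSn.
  by move: Hev; rewrite -HD HD1 HD2 add1n add1n /= negbK.
have := L5 H1 H2 Gy'' (j:=j) (k:=k).
rewrite /y'' [flip k (flip j _)]flipC !flipK; apply.
by rewrite eq_sym.
Qed.

Lemma absL (W : finType) (h : network W) : A1 (conjn h) -> A2 (conjn h) ->
  injective (conjn h) \/ even_self_dual h \/ odd_self_dual h.
Proof.
move=> H1 H2; set G := conjn h.
case: (boolP [forall x, forall x', (G x == G x') ==> (x == x')]) => [/forallP Hi|].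
  left => x x' E; move: (Hi x) => /forallP /(_ x') /implyP.
  by rewrite E eqxx => /(_ isT) /eqP.
move=> /forallPn [x /forallPn [x' ]]; rewrite negb_imply => /andP [/eqP E ne].
have xc : x' = cmp x by case: (L3 H2 E) => // ex; rewrite ex eqxx in ne.
set w := G x.
have Gw : good G w by exists x; rewrite -xc.
have img : forall y, (exists c, G c = y) <-> ~~ odd (wt (xorp y w)).
  move=> y; split.
    move=> [c Hc]; apply/negP => Hodd.
    have [j jD] : exists j, j \in [set v | xorp y w v].
      apply/set0Pn; apply/negP => /eqP D0; move: Hodd; by rewrite /wt D0 cards0.
    have Gy' : good G (flip j y).
      apply: (L6 H1 H2 Gw).
      move: Hodd; rewrite !odd_wt_xor odd_wt_flip.
      by case: (odd (wt y)) => /= H; rewrite ?negbK.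
    by apply: (@L4 _ _ H2 _ Gy' j c); rewrite flipK.
  move=> Hev; have [a [Ha _]] := L6 H1 H2 Gw Hev; by exists a.
have sd : forall z, G (cmp z) = G z.
  move=> z; have [a [Ha Hca]] : good G (G z).
    by apply: (L6 H1 H2 Gw); apply/img; exists z.
  move: (Ha) => /(L3 H2) [<-|->]; first by rewrite Hca Ha.
  by rewrite cmpK Ha Hca.
have hsd : self_dual h.
  move=> z; apply/ffunP => v.
  have : G (cmp z) v = G z v by rewrite sd.
  rewrite /G /conjn /cmp /xorp /ones !ffunE.
  by case: (h _ v); case: (h z v); case: (z v).
case Hw: (odd (wt w)).
  right; right; split => // y; rewrite /odd_pt.
  split => [/img|H]; last (apply/img).
    by rewrite odd_wt_xor Hw addbT negbK.
  by rewrite odd_wt_xor Hw addbT negbK.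
right; left; split => // y; rewrite /even_pt.
split => [/img|H]; last (apply/img).
  by rewrite odd_wt_xor Hw addbF.
by rewrite odd_wt_xor Hw addbF.
Qed.

Lemma glue_in (V : finType) (I : {set V}) (xI : point (subT I)) z (u : subT I) :
  glue xI z (val u) = xI u.
Proof. by rewrite /glue ffunE valK. Qed.

Lemma glue_out (V : finType) (I : {set V}) (xI : point (subT I)) z v :
  v \notin I -> glue xI z v = z v.
Proof. by move=> H; rewrite /glue ffunE insubN. Qed.

Lemma conjnE (V : finType) (f : network V) (I : {set V}) z (xI : point (subT I)) u :
  conjn (subnet f I z) xI u = conjn f (glue xI z) (val u).
Proof. by rewrite /conjn /xorp /subnet !ffunE valK. Qed.

Definition res (V : finType) (I : {set V}) (x : point V) : point (subT I) :=
  [ffun u => x (val u)].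

Lemma glue_res (V : finType) (I : {set V}) (x z : point V) :
  (forall v, v \notin I -> x v = z v) -> glue (res I x) z = x.
Proof.
move=> H; apply/ffunP => v; case: (boolP (v \in I)) => Hv.
  by rewrite /glue ffunE (insubT (fun v => v \in I) Hv) /res ffunE SubK.
by rewrite glue_out // H.
Qed.

Lemma res_glue (V : finType) (I : {set V}) (xI : point (subT I)) z :
  res I (glue xI z) = xI.
Proof. by apply/ffunP => u; rewrite ffunE glue_in. Qed.

Definition Qinj (V : finType) (f : network V) (I : {set V}) :=
  forall x y : point V, (forall v, v \notin I -> x v = y v) ->
    (forall v, v \in I -> conjn f x v = conjn f y v) -> x = y.
Definition Qsur (V : finType) (f : network V) (I : {set V}) :=
  forall x y : point V, exists x' : point V, (forall v, v \notin I -> x' v = x v) /\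
    (forall v, v \in I -> conjn f x' v = y v).
Definition Q (V : finType) (f : network V) (I : {set V}) :=
  forall z, injective (conjn (subnet f I z)).

Lemma Q_inj (V : finType) (f : network V) I : Q f I -> Qinj f I.
Proof.
move=> HQ x y Hout Hin.
have ex : glue (res I x) x = x by apply: glue_res.
have ey : glue (res I y) x = y by apply: glue_res => v /Hout.
have e : res I x = res I y.
  apply: (HQ x); apply/ffunP => u; rewrite !conjnE ex ey.
  exact: Hin (val u) (valP u).
by rewrite -ex -ey e.
Qed.

Lemma Q_sur (V : finType) (f : network V) I : Q f I -> Qsur f I.
Proof.
move=> HQ x y.
have [g' K1 K2] := injF_bij (HQ x).
exists (glue (g' (res I y)) x); split.
  by move=> v Hv; rewrite glue_out.
move=> v Hv.
have := conjnE f x (g' (res I y)) (Sub v Hv); rewrite SubK => <-.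
by rewrite K2 ffunE SubK.
Qed.

Lemma A1_of (V : finType) (f : network V) (I : {set V}) z :
  (forall v, v \in I -> Qsur f (I :\ v)) -> A1 (conjn (subnet f I z)).
Proof.
move=> HS j b yI.
set v := val j.
have vI : v \in I := valP j.
pose z' : point V := [ffun w => if w == v then b else z w].
have [x' [Hout Hin]] := HS v vI z' (glue yI z).
exists (res I x'); split.
  by rewrite ffunE Hout ?inE ?eqxx // ffunE eqxx.
move=> k kj.
rewrite conjnE glue_res; last first.
  move=> w wI; rewrite Hout; last by rewrite inE (negbTE wI) andbF.
  rewrite ffunE; case: eqP => // wv; by move: wI; rewrite wv vI.
rewrite Hin ?glue_in //.
by rewrite !inE (valP k) andbT val_eqE.
Qed.

Lemma A2_of (V : finType) (f : network V) (I : {set V}) z :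
  (forall v, v \in I -> Qinj f (I :\ v)) -> A2 (conjn (subnet f I z)).
Proof.
move=> HI j x x' ej Hk.
have vI : val j \in I := valP j.
rewrite -(res_glue x z) -(res_glue x' z); congr (res I _).
apply: (HI _ vI).
  move=> w; rewrite !inE negb_and negbK => /orP [/eqP -> | wI].
    by rewrite !glue_in.
  by rewrite !glue_out.
move=> w; rewrite !inE => /andP [wv wI].
have := Hk (Sub w wI); rewrite !conjnE SubK; apply.
by rewrite -val_eqE SubK.
Qed.

Lemma allQ (V : finType) (f : network V) :
  ~ (exists (I : {set V}) (z : point V), I != set0 /\
       (even_self_dual (subnet f I z) \/ odd_self_dual (subnet f I z))) ->
  forall I, Q f I.
Proof.
move=> NoSD.
suff H : forall n (I : {set V}), #|I| = n -> Q f I by move=> I; exact: (H _ I erefl).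
elim/ltn_ind => n IH I HI z.
case: (eqVneq I set0) => [I0 | In0].
  move=> x y _; apply/ffunP => u; exfalso; move: (val u) (valP u) => w; by rewrite I0 inE.
have Hlt : forall v, v \in I -> Q f (I :\ v).
  move=> v vI; apply: (IH #|I :\ v|) => //.
  by rewrite -HI (cardsD1 v I) vI.
have [|[Hs|Hs]] := @absL _ _ (@A1_of _ f I z (fun v vI => Q_sur (Hlt v vI)))
                            (@A2_of _ f I z (fun v vI => Q_inj (Hlt v vI))) => //.
  by exfalso; apply: NoSD; exists I, z; split => //; left.
by exfalso; apply: NoSD; exists I, z; split => //; right.
Qed.

Lemma inj_ufp (W : finType) (h : network W) : injective (conjn h) -> unique_fixed_point h.
Proof.
move=> Hinj.
have [g' K1 K2] := injF_bij Hinj.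
pose zero : point W := [ffun _ => false].
have e : conjn h (g' zero) = zero := K2 zero.
exists (g' zero); split.
  apply/ffunP => v; have := congr1 (fun p : point W => p v) e.
  rewrite /conjn /xorp !ffunE; by case: (h _ v); case: (g' zero v).
move=> y Hy; apply: Hinj; rewrite e; apply/ffunP => v.
by rewrite /conjn /xorp Hy !ffunE addbb.
Qed.

Lemma sd_nuniq (W : finType) (h : network W) (u : W) :
  self_dual h -> unique_fixed_point h -> False.
Proof.
move=> sd [x [Hx Hu]].
have : h (xorp x (ones W)) = xorp x (ones W) by rewrite sd Hx.
move/Hu => /ffunP /(_ u); rewrite /xorp /ones !ffunE; by case: (x u).
Qed.

Theorem corollary2 (V : finType) (HV : 0 < #|V|) (f : network V) :
  (forall (I : {set V}) (z : point V), I != set0 ->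
     unique_fixed_point (subnet f I z))
  <->
  ~ (exists (I : {set V}) (z : point V), I != set0 /\
       (even_self_dual (subnet f I z) \/ odd_self_dual (subnet f I z))).
Proof.
split.
  move=> Hall [I [z [In0 Hsd]]].
  have [v vI] := set0Pn _ In0.
  have Hs : self_dual (subnet f I z) by case: Hsd => [[]|[]].
  exact: (sd_nuniq (Sub v vI : subT I) Hs (Hall I z In0)).
move=> NoSD I z In0; apply: inj_ufp; exact: allQ NoSD I z.
Qed.
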